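(* Let $\mathcal{F}$ be a family of topological radicals, let $\mathcal{P}\in\mathcal{F}$ satisfy $\Sigma_\beta\le\mathcal{P}$, and let $\mathcal{G}=\mathcal{F}\setminus\{\mathcal{P}\}$. Then $(\mathtt{H}_{\mathcal{F}})^a\le\mathcal{P}^a\ast\mathtt{H}_{\mathcal{G}}$ and $((\mathtt{H}_{\mathcal{F}})^a)^\ast=(\mathcal{P}^a\ast\mathtt{H}_{\mathcal{G}})^\ast$.
   Context: All algebras are Banach algebras. An ideal map assigns to each $A$ a two-sided ideal; a closed ideal map assigns a closed one. A topological radical is a closed ideal map $\mathcal{P}$ such that: $f(\mathcal{P}(A))\subseteq\mathcal{P}(B)$ for continuous surjective homomorphisms $f:A\to B$; $\mathcal{P}(A/\mathcal{P}(A))=0$; $\mathcal{P}(\mathcal{P}(A))=\mathcal{P}(A)$; for each closed ideal $J$ of $A$, $\mathcal{P}(J)$ is an ideal of $A$ contained in $\mathcal{P}(A)$. $\mathcal{P}\le\mathcal{R}$ means $\mathcal{P}(A)\subseteq\mathcal{R}(A)$ for all $A$. $\mathtt{H}_{\mathcal{F}}(A)=\overline{\sum_{\mathcal{R}\in\mathcal{F}}\mathcal{R}(A)}$ (the zero ideal if the family is empty). For an ideal map $\mathcal{P}$ and closed ideal map $\mathcal{R}$, $(\mathcal{P}\ast\mathcal{R})(A)=q^{-1}(\mathcal{P}(A/\mathcal{R}(A)))$ with $q$ the quotient map. $\Sigma_a(A)$ is the sum of all commutative ideals of $A$, $\Sigma_\beta(A)$ the sum of all nilpotent ideals; $\mathcal{P}^a=\Sigma_a\ast\mathcal{P}$.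 Convolution procedure: for a closed ideal map $\mathcal{R}$, set $I_0=0$, $I_{\alpha+1}=q_{I_\alpha}^{-1}(\mathcal{R}(A/I_\alpha))$, $I_\beta=\overline{\bigcup_{\alpha<\beta}I_\alpha}$ for limit $\beta$; $\mathcal{R}^\ast(A)$ is the ideal at which this chain stabilizes. *)

(* Defs.v *)
From HB Require Import structures.
From mathcomp Require Import all_boot all_order all_algebra.
From mathcomp Require Import all_classical all_reals all_analysis.
From mathcomp Require Import complex.
Set Implicit Arguments. Unset Strict Implicit. Unset Printing Implicit Defensive.
Import Order.TTheory GRing.Theory Num.Theory ComplexField.
Import numFieldNormedType.Exports.
Local Open Scope classical_set_scope.
Local Open Scope ring_scope.

Section BanachAlgebras.
Variable R : realType.
Local Notation C := (R[i]).

Record banach_algebra := BanachAlgebra {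
  ba_sort :> normedModType C;
  ba_mul : ba_sort -> ba_sort -> ba_sort;
  ba_mulA : forall x y z, ba_mul x (ba_mul y z) = ba_mul (ba_mul x y) z;
  ba_mulDl : forall x y z, ba_mul (x + y) z = ba_mul x z + ba_mul y z;
  ba_mulDr : forall x y z, ba_mul x (y + z) = ba_mul x y + ba_mul x z;
  ba_mulZl : forall (a : C) x y, ba_mul (a *: x) y = a *: ba_mul x y;
  ba_mulZr : forall (a : C) x y, ba_mul x (a *: y) = a *: ba_mul x y;
  ba_normM : forall x y, `|ba_mul x y| <= `|x| * `|y|;
  ba_complete : forall F : set_system ba_sort, ProperFilter F -> cauchy F -> cvg F
}.

Definition is_hom (A B : banach_algebra) (f : A -> B) :=
  [/\ forall x y, f (x + y) = f x + f y,
      forall (a : C) x, f (a *: x) = a *: f x &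
      forall x y, f (ba_mul x y) = ba_mul (f x) (f y)].

Definition is_ideal (A : banach_algebra) (I : set A) :=
  [/\ I 0,
      forall x y, I x -> I y -> I (x + y),
      forall (a : C) x, I x -> I (a *: x) &
      forall a x, I x -> I (ba_mul a x) /\ I (ba_mul x a)].

Definition is_closed_ideal (A : banach_algebra) (I : set A) :=
  is_ideal I /\ closed I.

Definition ideal_map := forall A : banach_algebra, set A.

Definition is_ideal_map (P : ideal_map) := forall A, is_ideal (P A).
Definition is_closed_ideal_map (P : ideal_map) := forall A, is_closed_ideal (P A).

Definition le_imap (P Q : ideal_map) := forall A, P A `<=` Q A.

(* q : A -> B presents B as the quotient A / I : a continuous surjective
   homomorphism with kernel I (by the open mapping theorem B is then
   topologically isomorphic to A / I). *)
Definition is_quotient_map (A B : banach_algebra) (I : set A) (q : A -> B) :=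
  [/\ is_hom q, continuous q, (forall y, exists x, q x = y) &
      q @^-1` [set 0] = I].

(* j : B -> A presents the closed ideal J of A as a Banach algebra:
   a continuous injective homomorphism with range J. *)
Definition is_ideal_embedding (A B : banach_algebra) (J : set A) (j : B -> A) :=
  [/\ is_hom j, continuous j, injective j & range j = J].

Definition is_topological_radical (P : ideal_map) :=
  [/\ is_closed_ideal_map P,
      (forall (A B : banach_algebra) (f : A -> B), is_hom f -> continuous f ->
          (forall y, exists x, f x = y) -> f @` P A `<=` P B),
      (forall (A B : banach_algebra) (q : A -> B),
          is_quotient_map (P A) q -> P B = [set 0]),
      (forall (A B : banach_algebra) (j : B -> A),
          is_ideal_embedding (P A) j -> j @` P B = P A) &
      (forall (A B : banach_algebra) (J : set A) (j : B -> A),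
          is_closed_ideal J -> is_ideal_embedding J j ->
          is_ideal (j @` P B) /\ j @` P B `<=` P A)].

Definition sum_family (A : banach_algebra) (S : set (set A)) : set A :=
  [set x | exists s : seq A,
      (forall y, y \in s -> exists2 I, S I & I y) /\ x = \sum_(y <- s) y].

(* families of ideal maps are predicates ideal_map -> Prop
   (the classical [set] type lives in too small a universe) *)
Definition H_fam (F : ideal_map -> Prop) : ideal_map := fun A =>
  closure (sum_family (fun I : set A => exists2 P, F P & I = P A)).

Definition is_commutative_ideal (A : banach_algebra) (I : set A) :=
  is_ideal I /\ (forall x y, I x -> I y -> ba_mul x y = ba_mul y x).

Definition is_nilpotent_ideal (A : banach_algebra) (I : set A) :=
  is_ideal I /\ exists n : nat, forall (x : A) (s : seq A),
    I x -> (forall y, y \in s -> I y) -> size s = n -> foldl (@ba_mul A) x s = 0.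

Definition Sigma_a : ideal_map := fun A =>
  sum_family [set I | @is_commutative_ideal A I].

Definition Sigma_beta : ideal_map := fun A =>
  sum_family [set I | @is_nilpotent_ideal A I].

(* (P * R)(A) = q^{-1}(P(A / R(A))) *)
Definition iconv (P Q : ideal_map) : ideal_map := fun A =>
  [set x : A | forall (B : banach_algebra) (q : A -> B),
     is_quotient_map (Q A) q -> P B (q x)].

Definition a_map (P : ideal_map) : ideal_map := iconv Sigma_a P.

(* Convolution procedure. One step: I |-> q_I^{-1}(Rm(A/I)) (closed when Rm is
   closed; we take the closure, which changes nothing for closed Rm). *)
Definition conv_step (Rm : ideal_map) (A : banach_algebra) (I : set A) : set A :=
  closure [set x : A | forall (B : banach_algebra) (q : A -> B),
                          is_quotient_map I q -> Rm B (q x)].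

(* The transfinite chain I_alpha, encoded ordinal-free as the smallest family
   containing 0, closed under the step and under closures of unions. *)
Inductive conv_tower (Rm : ideal_map) (A : banach_algebra) : set A -> Prop :=
| conv_tower_step I : @conv_tower Rm A I -> @conv_tower Rm A (@conv_step Rm A I)
| conv_tower_lim (S : set (set A)) : S `<=` @conv_tower Rm A ->
    @conv_tower Rm A (closure ([set 0] `|` \bigcup_(I in S) I)).

(* Rm^*(A): the ideal at which the chain stabilizes (its largest member). *)
Definition conv_star (Rm : ideal_map) : ideal_map := fun A =>
  closure ([set 0] `|` \bigcup_(I in @conv_tower Rm A) I).

End BanachAlgebras.

(* Main.v *)
Require Import Defs.
From HB Require Import structures.
From mathcomp Require Import all_boot all_order all_algebra.
From mathcomp Require Import all_classical all_reals all_analysis.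
From mathcomp Require Import complex.
From mathcomp.algebra_tactics Require Import ring lra.
Set Implicit Arguments. Unset Strict Implicit. Unset Printing Implicit Defensive.
Import Order.TTheory GRing.Theory Num.Theory ComplexField.
Import numFieldNormedType.Exports.
Local Open Scope classical_set_scope.
Local Open Scope ring_scope.
Local Open Scope complex_scope.
Section Z. Variable V : zmodType. Implicit Types x y z j a b c : V.
Lemma zm1 x y j : x - (j + (x - y)) = y - j.
Proof. by rewrite opprD opprB addrCA [x + _]addrC subrK addrC. Qed.
Lemma zm2 x y j1 j2 : x + y - (j1 + j2) = (x - j1) + (y - j2).
Proof. by rewrite opprD addrACA. Qed.
Lemma zm3 a b : a - (a - b) = b.
Proof. by rewrite opprB addrC subrK. Qed.
Lemma zm4 a b c : a - c = (a - b) + (b - c).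
Proof. by rewrite addrA subrK. Qed.
Lemma zm5 a b c j : (a + c) - (b + (c + j)) = a - b - j.
Proof. by rewrite addrA opprD addrA [b + c]addrC addrKA. Qed.
Lemma zm6 a c : a + c - a = c.
Proof. by rewrite addrAC subrr add0r. Qed.
End Z.

Section NormA.
Variable R : realType.
Local Notation C := R[i].
Variable A : banach_algebra R.

Lemma ltr0c' (k : R) : (0 < k%:C) = (0 < k).
Proof. by rewrite -ltcR. Qed.

Definition nr (v : A) : R := complex.Re `|v|.

Lemma nrE v : `|v| = (nr v)%:C.
Proof. by rewrite /nr RRe_real // normr_real. Qed.

Lemma nr_ge0 v : 0 <= nr v.
Proof. by rewrite -ler0c -nrE normr_ge0. Qed.

Lemma nrD u v : nr (u + v) <= nr u + nr v.
Proof. by rewrite -lecR rmorphD /= -!nrE ler_normD. Qed.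

Lemma nrN v : nr (- v) = nr v.
Proof. by rewrite /nr normrN. Qed.

Lemma nrC u v : nr (u - v) = nr (v - u).
Proof. by rewrite -nrN opprB. Qed.

Lemma nr0 : nr 0 = 0.
Proof. by rewrite /nr normr0. Qed.

Lemma nr_eq0 v : nr v = 0 -> v = 0.
Proof. by move=> h; apply/normr0_eq0; rewrite nrE h. Qed.

Definition nk (a : C) : R := complex.Re `|a|.

Lemma nkE a : `|a| = (nk a)%:C.
Proof. by rewrite /nk RRe_real // normr_real. Qed.

Lemma nk_ge0 a : 0 <= nk a.
Proof. by rewrite -ler0c -nkE normr_ge0. Qed.

Lemma nrZ (a : C) v : nr (a *: v) = nk a * nr v.
Proof. apply: complexI. by rewrite rmorphM /= -!nrE -nkE normrZ. Qed.

Lemma nrM x y : nr (ba_mul x y) <= nr x * nr y.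
Proof. by rewrite -lecR rmorphM /= -!nrE ba_normM. Qed.

Lemma nrB_tri x y z : nr (x - z) <= nr (x - y) + nr (y - z).
Proof. by rewrite (_ : x - z = (x - y) + (y - z)) ?nrD // addrA subrK. Qed.

Lemma pos_realE (e : C) : 0 < e -> e = (complex.Re e)%:C /\ 0 < complex.Re e.
Proof.
move=> e0; have er : e \is Num.real by apply: gtr0_real.
split; first by rewrite RRe_real.
by rewrite -ltcR RRe_real.
Qed.

Lemma ballA (x y : A) (e : R) : ball x e%:C y <-> nr (x - y) < e.
Proof. by rewrite -ball_normE /= nrE ltcR. Qed.

Lemma closureA (S : set A) x :
  closure S x <-> forall e, 0 < e -> exists y, S y /\ nr (x - y) < e.
Proof.
split.
  move=> cl e e0; have : nbhs x (ball x e%:C) by apply: nbhsx_ballx; rewrite ltr0c'.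
  move=> /cl [y [Sy /ballA bxy]]; by exists y.
move=> h B /nbhs_ballP [e e0 sB].
have [eE e'0] := pos_realE e0.
have [y [Sy hy]] := h _ e'0; exists y; split => //; apply: sB.
by rewrite eE; apply/ballA.
Qed.

End NormA.

Section Maps.
Variable R : realType.
Local Notation C := R[i].

Lemma contP (A B : banach_algebra R) (f : A -> B) :
  (forall x e, 0 < e -> exists2 d, 0 < d & forall y, nr (x - y) < d -> nr (f x - f y) < e) ->
  continuous f.
Proof.
move=> h x; apply/cvgrPdist_lt => eps eps0.
have [eE e0] := pos_realE eps0; rewrite eE.
have [d d0 hd] := h x _ e0.
apply/nbhs_ballP; exists d%:C; first by rewrite /= ltr0c'.
by move=> y /ballA /hd; rewrite /= nrE ltcR.
Qed.

Lemma contE (A B : banach_algebra R) (f : A -> B) : continuous f ->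
  forall x e, 0 < e -> exists2 d, 0 < d & forall y, nr (x - y) < d -> nr (f x - f y) < e.
Proof.
move=> fc x e e0.
have := fc x; move/cvgrPdist_lt => /(_ e%:C); rewrite ltr0c' => /(_ e0).
move=> /nbhs_ballP [d d0 hd]; have [dE d'0] := pos_realE d0.
exists (complex.Re d) => // y hy; have := hd y; rewrite dE => /(_ (proj2 (ballA _ _ _) hy)).
by rewrite /= nrE ltcR.
Qed.

End Maps.
Section IdealLemmas.
Variable R : realType.
Local Notation C := R[i].
Variable A : banach_algebra R.
Implicit Types x y z : A.

Lemma bmul0l y : ba_mul (0 : A) y = 0.
Proof. by apply: (addIr (ba_mul (0 : A) y)); rewrite add0r -ba_mulDl addr0. Qed.

Lemma bmul0r y : ba_mul y (0 : A) = 0.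
Proof. by apply: (addIr (ba_mul y (0 : A))); rewrite add0r -ba_mulDr addr0. Qed.

Lemma bmulNl x y : ba_mul (- x) y = - ba_mul x y.
Proof. by apply/eqP; rewrite -subr_eq0 opprK -ba_mulDl addNr bmul0l. Qed.

Lemma bmulNr x y : ba_mul x (- y) = - ba_mul x y.
Proof. by apply/eqP; rewrite -subr_eq0 opprK -ba_mulDr addNr bmul0r. Qed.

Lemma bmulBl x y z : ba_mul (x - y) z = ba_mul x z - ba_mul y z.
Proof. by rewrite ba_mulDl bmulNl. Qed.

Lemma bmulBr x y z : ba_mul z (x - y) = ba_mul z x - ba_mul z y.
Proof. by rewrite ba_mulDr bmulNr. Qed.

Variable I : set A.
Hypothesis HI : is_ideal I.

Lemma id0 : I 0. Proof. by case: HI. Qed.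
Lemma idD x y : I x -> I y -> I (x + y). Proof. by case: HI => _ h _ _; apply: h. Qed.
Lemma idZ (a : C) x : I x -> I (a *: x). Proof. by case: HI => _ _ h _; apply: h. Qed.
Lemma idN x : I x -> I (- x). Proof. by move=> /(idZ (-1)); rewrite scaleN1r. Qed.
Lemma idB x y : I x -> I y -> I (x - y). Proof. by move=> ? ?; apply: idD => //; apply: idN. Qed.
Lemma idMl a x : I x -> I (ba_mul a x). Proof. by move=> hx; case: HI => _ _ _ /(_ a x hx) []. Qed.
Lemma idMr a x : I x -> I (ba_mul x a). Proof. by move=> hx; case: HI => _ _ _ /(_ a x hx) []. Qed.
Lemma idBC x y : I (x - y) -> I (y - x). Proof. by move=> /idN; rewrite opprB. Qed.
Lemma idBtr x y z : I (x - y) -> I (y - z) -> I (x - z).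
Proof. by move=> h1 h2; have := idD h1 h2; rewrite addrA subrK. Qed.
Lemma idsum (s : seq A) : (forall y, y \in s -> I y) -> I (\sum_(y <- s) y).
Proof.
elim: s => [|a s IH] h; first by rewrite big_nil; apply: id0.
rewrite big_cons; apply: idD; first by apply: h; rewrite mem_head.
by apply: IH => y ys; apply: h; rewrite in_cons ys orbT.
Qed.

End IdealLemmas.

Record cideal (R : realType) (A : banach_algebra R) :=
  CIdeal { ci_set : set A; ci_prop : is_closed_ideal ci_set }.

Section Quot.
Variable R : realType.
Local Notation C := R[i].
Variable A : banach_algebra R.
Variable I : cideal A.
Local Notation J := (ci_set I).
Let HJ : is_ideal J := proj1 (ci_prop I).
Let HJc : closed J := proj2 (ci_prop I).

Definition qrel (x y : A) : bool := `[< J (x - y) >].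

Lemma qrel_ex x : exists y, qrel x y.
Proof. by exists x; apply/asboolP; rewrite subrr; apply: id0. Qed.

Definition rep (x : A) : A := xchoose (qrel_ex x).

Lemma rep_rel x : J (x - rep x).
Proof. exact/asboolP/(xchooseP (qrel_ex x)). Qed.

Lemma rep_eq x y : J (x - y) -> rep x = rep y.
Proof.
move=> hxy; apply: eq_xchoose => z; rewrite /qrel; apply/idP/idP => /asboolP h; apply/asboolP.
  by apply: (idBtr HJ (idBC HJ hxy)).
exact: (idBtr HJ hxy).
Qed.

Lemma rep_idem x : rep (rep x) == rep x.
Proof. by apply/eqP/rep_eq; apply: (idBC HJ); apply: rep_rel. Qed.

Record qt := Qt { qval : A; qvalP : rep qval == qval }.

HB.instance Definition _ := [isSub for qval].
HB.instance Definition _ := [Choice of qt by <:].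

Definition qpi (x : A) : qt := Qt (rep_idem x).

Lemma qvalK a : qpi (qval a) = a.
Proof. by apply: val_inj => /=; apply/eqP/qvalP. Qed.

Lemma qpi_rel x : J (x - qval (qpi x)).
Proof. exact: rep_rel. Qed.

Lemma qpi_eqP x y : qpi x = qpi y <-> J (x - y).
Proof.
split => [h|h]; last by apply: val_inj => /=; apply: rep_eq.
have := qpi_rel y; rewrite -h => h2.
have h3 := idBC HJ h2. have h1 := qpi_rel x. exact (idBtr HJ h1 h3).
Qed.

Lemma qpi_eq x y : J (x - y) -> qpi x = qpi y.
Proof. by move/qpi_eqP. Qed.

Definition qzero := qpi 0.
Definition qadd (a b : qt) := qpi (qval a + qval b).
Definition qopp (a : qt) := qpi (- qval a).
Definition qscale (k : C) (a : qt) := qpi (k *: qval a).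

Lemma qaddE x y : qadd (qpi x) (qpi y) = qpi (x + y).
Proof.
rewrite /qadd; apply: qpi_eq.
have := idD HJ (idBC HJ (qpi_rel x)) (idBC HJ (qpi_rel y)).
by rewrite opprD addrACA.
Qed.

Lemma qoppE x : qopp (qpi x) = qpi (- x).
Proof.
rewrite /qopp; apply: qpi_eq.
by rewrite opprK addrC; apply: qpi_rel.
Qed.

Lemma qscaleE k x : qscale k (qpi x) = qpi (k *: x).
Proof.
rewrite /qscale; apply: qpi_eq.
have := idZ HJ k (idBC HJ (qpi_rel x)).
by rewrite scalerBr.
Qed.

Lemma qaddA : associative qadd.
Proof. by move=> a b c; rewrite -[a]qvalK -[b]qvalK -[c]qvalK !qaddE addrA. Qed.
Lemma qaddC : commutative qadd.
Proof. by move=> a b; rewrite -[a]qvalK -[b]qvalK !qaddE addrC. Qed.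
Lemma qadd0 : left_id qzero qadd.
Proof. by move=> a; rewrite -[a]qvalK /qzero qaddE add0r. Qed.
Lemma qaddN : left_inverse qzero qopp qadd.
Proof. by move=> a; rewrite -[a]qvalK qoppE qaddE addNr. Qed.

HB.instance Definition _ := GRing.isZmodule.Build qt qaddA qaddC qadd0 qaddN.

Lemma qpiD x y : qpi (x + y) = qpi x + qpi y.
Proof. exact: (esym (qaddE x y)). Qed.

Lemma qscaleA a b v : qscale a (qscale b v) = qscale (a * b) v.
Proof. by rewrite -[v]qvalK !qscaleE scalerA. Qed.
Lemma qscale1 : left_id 1 qscale.
Proof. by move=> v; rewrite -[v]qvalK qscaleE scale1r. Qed.
Lemma qscaleDr : right_distributive qscale +%R.
Proof. by move=> a u v; rewrite -[u]qvalK -[v]qvalK -qpiD !qscaleE -qpiD scalerDr. Qed.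
Lemma qscaleDl v : {morph qscale^~ v: a b / a + b}.
Proof. by move=> a b; rewrite -[v]qvalK !qscaleE -qpiD scalerDl. Qed.

HB.instance Definition _ := GRing.Zmodule_isLmodule.Build C qt qscaleA qscale1 qscaleDr qscaleDl.

Lemma qpiZ (k : C) x : qpi (k *: x) = k *: qpi x.
Proof. exact: (esym (qscaleE k x)). Qed.
Lemma qpi0 : qpi 0 = 0.
Proof. by []. Qed.
Lemma qpiN x : qpi (- x) = - qpi x.
Proof. exact: (esym (qoppE x)). Qed.
Lemma qpiB x y : qpi (x - y) = qpi x - qpi y.
Proof. by rewrite qpiD qpiN. Qed.
Lemma qpi_ker x : qpi x = 0 <-> J x.
Proof. by rewrite -qpi0; split => [/qpi_eqP|h]; [rewrite subr0|apply/qpi_eqP; rewrite subr0]. Qed.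
Lemma qpi_surj (a : qt) : exists x, qpi x = a.
Proof. by exists (qval a); apply: qvalK. Qed.

Definition dset (x : A) : set R := [set nr (x - j) | j in J].
Definition dist (x : A) : R := inf (dset x).

Lemma dset_ne x : dset x !=set0.
Proof. by exists (nr (x - 0)); exists 0 => //; apply: id0. Qed.

Lemma dset_lb x : has_lbound (dset x).
Proof. by exists 0 => _ [j _ <-]; apply: nr_ge0. Qed.

Lemma dist_le x j : J j -> dist x <= nr (x - j).
Proof. by move=> Jj; apply: (ge_inf (dset_lb x)); exists j. Qed.

Lemma dist_glb1 x c : (forall j, J j -> c <= nr (x - j)) -> c <= dist x.
Proof. by move=> h; apply: lb_le_inf; [apply: dset_ne|move=> _ [j Jj <-]; apply: h]. Qed.

Lemma dist_ge0 x : 0 <= dist x.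
Proof. by apply: dist_glb1 => j _; apply: nr_ge0. Qed.

Lemma dist_lt x e : 0 < e -> exists j, J j /\ nr (x - j) < dist x + e.
Proof.
move=> e0; have [_ [j Jj <-] h] := inf_adherent e0 (conj (dset_ne x) (dset_lb x)).
by exists j.
Qed.

Lemma dist_glb x c m : 0 <= m -> (forall j, J j -> c <= m * nr (x - j)) -> c <= m * dist x.
Proof.
rewrite le0r => /orP [/eqP ->|m0] h.
  by have := h 0 (id0 HJ); rewrite !mul0r.
rewrite -ler_pdivrMl //; apply: dist_glb1 => j Jj.
by rewrite ler_pdivrMl //; apply: h.
Qed.

Lemma dist_eq x y : J (x - y) -> dist x = dist y.
Proof.
move=> hxy; apply/le_anti/andP; split.
  apply: dist_glb1 => j Jj; have := dist_le x (idD HJ Jj hxy).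
  by rewrite zm1.
apply: dist_glb1 => j Jj; have := dist_le y (idD HJ Jj (idBC HJ hxy)).
by rewrite zm1.
Qed.

Lemma dist_qpi z : dist (qval (qpi z)) = dist z.
Proof. by apply: dist_eq; apply: (idBC HJ); apply: qpi_rel. Qed.

Lemma distD x y : dist (x + y) <= dist x + dist y.
Proof.
have h : forall j1 j2, J j1 -> J j2 -> dist (x + y) <= nr (x - j1) + nr (y - j2).
  move=> j1 j2 J1 J2; apply: le_trans (dist_le _ (idD HJ J1 J2)) _.
  by rewrite zm2 nrD.
rewrite -lerBlDr; apply: dist_glb1 => j1 J1.
rewrite lerBlDr [nr _ + _]addrC -lerBlDr; apply: dist_glb1 => j2 J2.
by rewrite lerBlDr [nr (y - _) + _]addrC; apply: h.
Qed.

Lemma distZle (k : C) x : dist (k *: x) <= nk k * dist x.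
Proof.
apply: dist_glb; first exact: nk_ge0.
by move=> j Jj; rewrite -nrZ scalerBr; apply: dist_le; apply: idZ.
Qed.

Lemma nkV (k : C) : nk k^-1 = (nk k)^-1.
Proof.
have e1 := nkE k; have e2 := nkE k^-1; have e3 := normfV k.
apply: complexI; rewrite fmorphV /= -e1 -e2; exact: e3.
Qed.

Lemma nk_eq0 (k : C) : (nk k == 0) = (k == 0).
Proof.
apply/eqP/eqP => [h|->]; last by rewrite /nk normr0.
by apply/normr0_eq0; rewrite nkE h.
Qed.

Lemma distZ (k : C) x : dist (k *: x) = nk k * dist x.
Proof.
apply/le_anti/andP; split; first exact: distZle.
have [->|k0] := eqVneq k 0.
  by rewrite (_ : nk 0 = 0) ?mul0r ?dist_ge0 // /nk normr0.
have nk0 : 0 < nk k by rewrite lt0r nk_eq0 k0 nk_ge0.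
have := distZle k^-1 (k *: x); rewrite scalerA mulVf // scale1r nkV.
by rewrite -(ler_pM2l nk0) mulrA mulfV ?mul1r // gt_eqF.
Qed.

Lemma distM x y : dist (ba_mul x y) <= dist x * dist y.
Proof.
have h : forall j1 j2, J j1 -> J j2 -> dist (ba_mul x y) <= nr (x - j1) * nr (y - j2).
  move=> j1 j2 J1 J2; apply: le_trans _ (nrM _ _).
  set jj := ba_mul x y - ba_mul (x - j1) (y - j2).
  have Jjj : J jj.
    rewrite /jj (zm4 _ (ba_mul x (y - j2))) -bmulBr -bmulBl !zm3.
    by apply: (idD HJ); [apply: (idMl HJ)|apply: (idMr HJ)].
  by have := dist_le (ba_mul x y) Jjj; rewrite /jj zm3.
rewrite mulrC; apply: dist_glb; first exact: dist_ge0.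
move=> j1 J1; rewrite mulrC; apply: dist_glb; first exact: nr_ge0.
by move=> j2 J2; apply: h.
Qed.

Definition qn (a : qt) : C := (dist (qval a))%:C.

Lemma qnD a b : qn (a + b) <= qn a + qn b.
Proof.
rewrite -[a]qvalK -[b]qvalK -qpiD /qn !dist_qpi -rmorphD /= lecR.
exact: distD.
Qed.

Lemma qnZ (l : C) a : qn (l *: a) = `|l| * qn a.
Proof. by rewrite -[a]qvalK -qpiZ /qn !dist_qpi distZ nkE rmorphM. Qed.

Lemma dist0_J x : dist x = 0 -> J x.
Proof.
move=> d0; have : closure J x.
  apply/closureA => e e0; have [j [Jj hj]] := dist_lt x e0.
  by exists j; split => //; rewrite d0 add0r in hj.
by rewrite -(proj1 (closure_id _) HJc).
Qed.

Lemma qn0 a : qn a = 0 -> a = 0.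
Proof.
rewrite /qn => /(congr1 (@complex.Re R)) /= d0.
by rewrite -[a]qvalK; apply/qpi_ker; apply: dist0_J.
Qed.

HB.instance Definition _ := Lmodule_isNormed.Build C qt qnD qnZ qn0.


Definition qd (u : qt) : R := dist (qval u).

Lemma qdE (u : qt) : `|u| = (qd u)%:C.
Proof. by []. Qed.

Lemma qdD (u v : qt) : qd (u + v) <= qd u + qd v.
Proof. by rewrite -lecR rmorphD /= -!qdE ler_normD. Qed.

Lemma qdN (u : qt) : qd (- u) = qd u.
Proof. by apply: complexI; rewrite -!qdE normrN. Qed.

Lemma qd_tri (u v w : qt) : qd (u - w) <= qd (u - v) + qd (v - w).
Proof. by rewrite (zm4 u v w) qdD. Qed.

Lemma qd_qpi x : qd (qpi x) = dist x.
Proof. exact: dist_qpi. Qed.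

Lemma dist_le_nr x : dist x <= nr x.
Proof. by have := dist_le x (id0 HJ); rewrite subr0. Qed.

Lemma qballE (c z : qt) (e : R) : ball c e%:C z <-> qd (c - z) < e.
Proof. by rewrite -ball_normE /= qdE ltcR. Qed.

Definition qmul (a b : qt) : qt := qpi (ba_mul (qval a) (qval b)).

Lemma qmulE x y : qmul (qpi x) (qpi y) = qpi (ba_mul x y).
Proof.
rewrite /qmul; apply: qpi_eq.
rewrite (zm4 _ (ba_mul x (qval (qpi y)))) -bmulBr -bmulBl.
apply: (idD HJ); last by apply: (idMl HJ); apply: (idBC HJ); apply: qpi_rel.
by apply: (idMr HJ); apply: (idBC HJ); apply: qpi_rel.
Qed.

Lemma qmulA x y z : qmul x (qmul y z) = qmul (qmul x y) z.
Proof. by rewrite -[x]qvalK -[y]qvalK -[z]qvalK !qmulE ba_mulA. Qed.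
Lemma qmulDl x y z : qmul (x + y) z = qmul x z + qmul y z.
Proof. by rewrite -[x]qvalK -[y]qvalK -[z]qvalK -qpiD !qmulE -qpiD ba_mulDl. Qed.
Lemma qmulDr x y z : qmul x (y + z) = qmul x y + qmul x z.
Proof. by rewrite -[x]qvalK -[y]qvalK -[z]qvalK -qpiD !qmulE -qpiD ba_mulDr. Qed.
Lemma qmulZl (a : C) x y : qmul (a *: x) y = a *: qmul x y.
Proof. by rewrite -[x]qvalK -[y]qvalK -qpiZ !qmulE -qpiZ ba_mulZl. Qed.
Lemma qmulZr (a : C) x y : qmul x (a *: y) = a *: qmul x y.
Proof. by rewrite -[x]qvalK -[y]qvalK -qpiZ !qmulE -qpiZ ba_mulZr. Qed.
Lemma qnormM x y : `|qmul x y| <= `|x| * `|y|.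
Proof.
rewrite -[x]qvalK -[y]qvalK qmulE !qdE !qd_qpi -rmorphM /= lecR.
exact: distM.
Qed.

Definition ee (n : nat) : R := (2^-1) ^+ n.

Lemma ee_gt0 n : 0 < ee n.
Proof. by rewrite /ee exprn_gt0 // invr_gt0. Qed.

Lemma eeS n : ee n = 2 * ee n.+1.
Proof. by rewrite /ee exprS mulrA mulfV ?mul1r. Qed.

Lemma ee_small (r : R) : 0 < r -> exists N, forall n, (N <= n)%N -> ee n < r.
Proof.
move=> r0.
have h : `|2^-1 : R| < 1 by rewrite ger0_norm ?invr_gt0 // invf_lt1 // ltr1n.
have := cvg_expr h; move/cvgr_dist_lt => /(_ r r0) [N _ hN].
exists N => n Nn; have := hN n Nn; rewrite /= sub0r normrN ger0_norm //.
Qed.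

Lemma qcomplete (F : set_system qt) : ProperFilter F -> cauchy F -> cvg F.
Proof.
move=> FF /(cauchyP F) Fc.
have hc : forall n, exists c, F (ball c (ee n)%:C).
  by move=> n; apply: Fc; rewrite ltr0c'; apply: ee_gt0.
have [c hcF] := choice hc.
have hcc : forall n, qd (c n - c n.+1) < 2 * ee n.
  move=> n; have [z [z1 z2]] := filter_ex (filterI (hcF n) (hcF n.+1)).
  move/qballE: z1 => z1; move/qballE: z2 => z2.
  apply: le_lt_trans (qd_tri _ z _) _; rewrite -qdN opprB in z2.
  have := ee_gt0 n.+1; rewrite (eeS n) in z1 *; lra.
have hj : forall n, exists j, J j /\ nr (qval (c n) - qval (c n.+1) - j) < 2 * ee n.
  move=> n; have := hcc n; rewrite -[c n]qvalK -[c n.+1]qvalK -qpiB qd_qpi !qvalK.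
  move=> hn; set X := qval (c n) - qval (c n.+1).
  have e0 : 0 < 2 * ee n - dist X by rewrite subr_gt0.
  have [j [Jj hj]] := dist_lt X e0.
  by exists j; split => //; lra.
have [j hjP] := choice hj.
pose y n := qval (c n) + \sum_(k < n) j k.
have hy1 : forall n, nr (y n - y n.+1) < 2 * ee n.
  by move=> n; rewrite /y big_ord_recr /= zm5; case: (hjP n).
have hyq : forall n, qpi (y n) = c n.
  move=> n; rewrite -[c n]qvalK; apply: qpi_eq; rewrite /y zm6.
  apply: (big_ind (fun z => J z)); [exact: (id0 HJ)|exact: (idD HJ)|].
  by move=> k _; case: (hjP k).
have hyb : forall n k, nr (y n - y (n + k)%N) <= 4 * ee n - 4 * ee (n + k)%N.
  move=> n; elim => [|k IH]; first by rewrite addn0 subrr nr0 subrr.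
  have := nrB_tri (y n) (y (n + k)%N) (y (n + k).+1).
  have := hy1 (n + k)%N; have := eeS (n + k)%N; rewrite addnS; lra.
have yc : cvg (y @ \oo).
  apply: (@ba_complete R A (y @ \oo) _).
  apply: cauchy_exP => eps eps0; have [eE e0] := pos_realE eps0.
  have r0 : 0 < complex.Re eps / 4 by rewrite divr_gt0.
  have [N hN] := ee_small r0; exists (y N); rewrite eE.
  exists N => // m /= Nm; apply/ballA.
  have := hyb N (m - N)%N; rewrite subnKC // => h.
  have := hN N (leqnn N); have := ee_gt0 m; lra.
set yl := lim (y @ \oo).
have hyl : forall N, nr (yl - y N) <= 4 * ee N.
  move=> N; apply/ler_addgt0Pr => d d0.
  have := yc; move/cvgrPdist_lt => /(_ d%:C); rewrite ltr0c' => /(_ d0) [M _ hM].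
  have := hM (maxn M N) (leq_maxl M N); rewrite /= nrE ltcR => h1.
  have := hyb N (maxn M N - N)%N; rewrite subnKC ?leq_maxr // => h2.
  have := nrB_tri yl (y (maxn M N)) (y N); rewrite (nrC (y (maxn M N))).
  have := ee_gt0 (maxn M N); lra.
apply/cvg_ex; exists (qpi yl); apply/fcvgrPdist_lt => eps eps0.
have [eE e0] := pos_realE eps0; rewrite eE.
have r0 : 0 < complex.Re eps / 5 by rewrite divr_gt0.
have [N hN] := ee_small r0; have hNN := hN N (leqnn N).
apply: filterS (hcF N) => z /qballE hz; rewrite qdE ltcR.
have := qd_tri (qpi yl) (c N) z; move: hz; rewrite -(hyq N) -qpiB qd_qpi => hz h3.
have := dist_le_nr (yl - y N); have := hyl N; lra.
Qed.

Definition qalg : banach_algebra R :=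
  @BanachAlgebra R qt qmul qmulA qmulDl qmulDr qmulZl qmulZr qnormM qcomplete.

Definition qmap : A -> qalg := qpi.

Lemma qmap_hom : is_hom qmap.
Proof. by split; [exact: qpiD|exact: qpiZ|move=> x y; rewrite /qmap -qmulE]. Qed.

Lemma nr_qalg (u : qalg) : nr u = qd u.
Proof. by []. Qed.

Lemma qmap_cont : continuous qmap.
Proof.
apply: contP => x e e0; exists e => // y h.
rewrite nr_qalg /qmap -qpiB qd_qpi; apply: le_lt_trans h; exact: dist_le_nr.
Qed.

Lemma qmap_quot : is_quotient_map J qmap.
Proof.
split; [exact: qmap_hom|exact: qmap_cont|exact: qpi_surj|].
by apply/seteqP; split => x /=; rewrite /qmap; move/qpi_ker.
Qed.

End Quot.

Section HomLemmas.
Variable R : realType.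
Local Notation C := R[i].
Variables (A B : banach_algebra R) (f : A -> B).
Hypothesis hf : is_hom f.

Lemma homD x y : f (x + y) = f x + f y. Proof. by case: hf. Qed.
Lemma homZ (a : C) x : f (a *: x) = a *: f x. Proof. by case: hf. Qed.
Lemma homM x y : f (ba_mul x y) = ba_mul (f x) (f y). Proof. by case: hf. Qed.
Lemma hom0 : f 0 = 0.
Proof. by apply: (addIr (f 0)); rewrite -homD !add0r. Qed.
Lemma homN x : f (- x) = - f x.
Proof. by rewrite -scaleN1r homZ scaleN1r. Qed.
Lemma homB x y : f (x - y) = f x - f y.
Proof. by rewrite homD homN. Qed.
Lemma hom_sum (s : seq A) : f (\sum_(y <- s) y) = \sum_(y <- map f s) y.
Proof.
elim: s => [|a s IH]; first by rewrite !big_nil hom0.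
by rewrite /= !big_cons homD IH.
Qed.

End HomLemmas.

Section Factor.
Variable R : realType.
Local Notation C := R[i].
Variables (A : banach_algebra R) (I : cideal A).
Local Notation J := (ci_set I).
Variables (B : banach_algebra R) (f : A -> B).
Hypothesis hf : is_hom f.
Hypothesis hJ : forall x, J x -> f x = 0.

Definition qfact (u : qalg I) : B := f (qval u).

Lemma qfactE x : qfact (qmap I x) = f x.
Proof.
rewrite /qfact /qmap; apply/eqP; rewrite -subr_eq0 -(homB hf).
apply/eqP; apply: hJ; apply: (idBC (proj1 (ci_prop I))); exact: qpi_rel.
Qed.

Lemma qfact_hom : is_hom qfact.
Proof.
split.
- by move=> u v; rewrite -[u]qvalK -[v]qvalK -qpiD; rewrite -!/(qmap I _) !qfactE homD.
- by move=> a u; rewrite -[u]qvalK -qpiZ; rewrite -!/(qmap I _) !qfactE homZ.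
- by move=> u v; rewrite -[u]qvalK -[v]qvalK /= qmulE; rewrite -!/(qmap I _) !qfactE homM.
Qed.

Lemma qfact_surj : (forall y, exists x, f x = y) -> forall y, exists u, qfact u = y.
Proof. by move=> hs y; have [x <-] := hs y; exists (qmap I x); apply: qfactE. Qed.

Lemma qfact_cont : continuous f -> continuous qfact.
Proof.
move=> fc; apply: contP => u e e0.
have [d d0 hd] := contE fc (qval u) e0.
exists d => // v; rewrite nr_qalg -[u]qvalK -[v]qvalK -qpiB qd_qpi !qvalK => hv.
have e1 : 0 < d - dist I (qval u - qval v) by rewrite subr_gt0.
have [j [Jj hj]] := dist_lt I (qval u - qval v) e1.
have : nr (qval u - (qval v + j)) < d by rewrite opprD addrA; lra.
by move/hd; rewrite /qfact (homD hf) (hJ Jj) addr0.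
Qed.

End Factor.

Lemma quot_exists (R : realType) (A : banach_algebra R) (J : set A) :
  is_closed_ideal J ->
  exists (B : banach_algebra R) (q : A -> B), is_quotient_map J q /\
    forall (D : banach_algebra R) (f : A -> D), is_hom f -> (forall x, J x -> f x = 0) ->
      exists g : B -> D, [/\ is_hom g, forall x, g (q x) = f x,
        ((forall y, exists x, f x = y) -> forall y, exists u, g u = y) &
        (continuous f -> continuous g)].
Proof.
move=> hJ; pose I := CIdeal hJ.
exists (qalg I), (qmap I); split; first exact: (qmap_quot I).
move=> D f hf hJf; exists (@qfact _ _ I _ f); split.
- exact: (@qfact_hom _ _ I _ f hf hJf).
- exact: (@qfactE _ _ I _ f hf hJf).
- exact: (@qfact_surj _ _ I _ f).
- exact: (@qfact_cont _ _ I _ f hf hJf).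
Qed.
Section M1.
Variable R : realType.
Local Notation C := R[i].

Lemma cont_comp (A B D : banach_algebra R) (f : A -> B) (g : B -> D) :
  continuous f -> continuous g -> continuous (g \o f).
Proof.
move=> fc gc; apply: contP => x e e0.
have [d d0 hd] := contE gc (f x) e0.
have [d' d'0 hd'] := contE fc x d0.
by exists d' => // y /hd' /hd.
Qed.

Lemma hom_comp (A B D : banach_algebra R) (f : A -> B) (g : B -> D) :
  is_hom f -> is_hom g -> is_hom (g \o f).
Proof.
move=> hf hg; split => /=.
- by move=> x y; rewrite (homD hf) (homD hg).
- by move=> a x; rewrite (homZ hf) (homZ hg).
- by move=> x y; rewrite (homM hf) (homM hg).
Qed.

Lemma id_hom (A : banach_algebra R) : is_hom (@id A).
Proof. by []. Qed.

Lemma sum_map (A : banach_algebra R) (g : A -> A) (s : seq A) :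
  g 0 = 0 -> (forall x y, g (x + y) = g x + g y) ->
  g (\sum_(y <- s) y) = \sum_(y <- map g s) y.
Proof.
move=> g0 gD; elim: s => [|a s IH]; first by rewrite !big_nil g0.
by rewrite /= !big_cons gD IH.
Qed.

Lemma sum_family_ideal (A : banach_algebra R) (S : set (set A)) :
  (forall I, S I -> is_ideal I) -> is_ideal (sum_family S).
Proof.
move=> hS.
have gen : forall g : A -> A, g 0 = 0 -> (forall x y, g (x + y) = g x + g y) ->
    (forall I x, S I -> I x -> I (g x)) ->
    forall x, sum_family S x -> sum_family S (g x).
  move=> g g0 gD gI x [s [hs ->]]; exists (map g s); split; last exact: sum_map.
  move=> y /mapP [z zs ->]; have [I SI Iz] := hs z zs.
  by exists I => //; apply: gI.
split.
- by exists [::]; split => //; rewrite big_nil.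
- move=> x y [s1 [h1 ->]] [s2 [h2 ->]]; exists (s1 ++ s2); split; last by rewrite big_cat.
  by move=> z; rewrite mem_cat => /orP [/h1|/h2].
- move=> a x; apply: gen; [exact: scaler0|exact: scalerDr|].
  by move=> I z SI Iz; apply: (idZ (hS _ SI)).
- move=> a x hx; split.
    apply: (gen (ba_mul a)) hx; [exact: bmul0r|exact: ba_mulDr|].
    by move=> I z SI Iz; apply: (idMl (hS _ SI)).
  apply: (gen (fun z => ba_mul z a)) hx; [exact: bmul0l|by move=> ? ?; apply: ba_mulDl|].
  by move=> I z SI Iz; apply: (idMr (hS _ SI)).
Qed.

Lemma closure_ideal (A : banach_algebra R) (I : set A) :
  is_ideal I -> is_ideal (closure I).
Proof.
move=> hI; split.
- by apply: subset_closure; apply: id0.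
- move=> x y /closureA hx /closureA hy; apply/closureA => e e0.
  have e2 : 0 < e / 2 by rewrite divr_gt0.
  have [x' [Ix' h1]] := hx _ e2; have [y' [Iy' h2]] := hy _ e2.
  exists (x' + y'); split; first exact: idD.
  rewrite zm2; apply: le_lt_trans (nrD _ _) _; lra.
- move=> a x /closureA hx; apply/closureA => e e0.
  have e2 : 0 < e / (nk a + 1) by rewrite divr_gt0 // ltr_wpDl // nk_ge0.
  have [x' [Ix' h1]] := hx _ e2.
  exists (a *: x'); split; first exact: idZ.
  rewrite -scalerBr nrZ; rewrite ltr_pdivlMr ?ltr_wpDl ?nk_ge0 // in h1.
  have := nk_ge0 a; have := nr_ge0 (x - x'); nra.
- move=> a x /closureA hx; split; apply/closureA => e e0.
  have e2 : 0 < e / (nr a + 1) by rewrite divr_gt0 // ltr_wpDl // nr_ge0.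
  + have [x' [Ix' h1]] := hx _ e2.
    exists (ba_mul a x'); split; first exact: idMl.
    rewrite -bmulBr; apply: le_lt_trans (nrM _ _) _.
    rewrite ltr_pdivlMr ?ltr_wpDl ?nr_ge0 // in h1.
    have := nr_ge0 a; have := nr_ge0 (x - x'); nra.
  + have e2 : 0 < e / (nr a + 1) by rewrite divr_gt0 // ltr_wpDl // nr_ge0.
    have [x' [Ix' h1]] := hx _ e2.
    exists (ba_mul x' a); split; first exact: idMr.
    rewrite -bmulBl; apply: le_lt_trans (nrM _ _) _.
    rewrite ltr_pdivlMr ?ltr_wpDl ?nr_ge0 // in h1.
    have := nr_ge0 a; have := nr_ge0 (x - x'); nra.
Qed.

Lemma cont_closure (A B : banach_algebra R) (f : A -> B) (S : set A) (T : set B) :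
  continuous f -> (forall x, S x -> T (f x)) -> forall x, closure S x -> closure T (f x).
Proof.
move=> fc hST x /closureA hx; apply/closureA => e e0.
have [d d0 hd] := contE fc x e0.
have [x' [Sx' h]] := hx _ d0.
by exists (f x'); split; [apply: hST|apply: hd].
Qed.

End M1.
Section M2.
Variable R : realType.
Local Notation C := R[i].

Definition surj (A B : banach_algebra R) (f : A -> B) := forall y, exists x, f x = y.

Definition fwd (M : ideal_map R) := forall (A B : banach_algebra R) (f : A -> B),
  is_hom f -> continuous f -> surj f -> forall x, M A x -> M B (f x).

Lemma image_ideal (A B : banach_algebra R) (f : A -> B) (I : set A) :
  is_hom f -> surj f -> is_ideal I -> is_ideal (f @` I).
Proof.
move=> hf fs hI; split.
- by exists 0; [apply: id0|apply: hom0].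
- by move=> _ _ [x Ix <-] [y Iy <-]; exists (x + y); [apply: idD|apply: homD].
- by move=> a _ [x Ix <-]; exists (a *: x); [apply: idZ|apply: homZ].
- move=> b _ [x Ix <-]; have [a <-] := fs b; split.
    by exists (ba_mul a x); [apply: idMl|apply: homM].
  by exists (ba_mul x a); [apply: idMr|apply: homM].
Qed.

Lemma Sigma_a_ideal (A : banach_algebra R) : is_ideal (@Sigma_a R A).
Proof. by apply: sum_family_ideal => I []. Qed.

Lemma Sigma_a_fwd (A B : banach_algebra R) (f : A -> B) :
  is_hom f -> surj f -> forall x, @Sigma_a R A x -> @Sigma_a R B (f x).
Proof.
move=> hf fs x [s [hs ->]]; exists (map f s); split; last exact: hom_sum.
move=> _ /mapP [z zs ->]; have [I [hI Icom] Iz] := hs z zs.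
exists (f @` I); last by exists z.
split; first exact: image_ideal.
move=> _ _ [u Iu <-] [v Iv <-]; rewrite -!(homM hf); congr f; exact: Icom.
Qed.

Lemma Sigma_a_zero (A : banach_algebra R) (x : A) : @Sigma_a R A x -> 
  (forall y, @Sigma_a R A y -> y = 0) -> x = 0.
Proof. by move=> h /(_ x h). Qed.

Definition qset (M : ideal_map R) (A : banach_algebra R) (I : set A) : set A :=
  [set x : A | forall (B : banach_algebra R) (q : A -> B),
     is_quotient_map I q -> M B (q x)].

Lemma iconvE (M N : ideal_map R) (A : banach_algebra R) : @iconv R M N A = qset M (N A).
Proof. by []. Qed.

Lemma qset_ideal (M : ideal_map R) (A : banach_algebra R) (I : set A) :
  (forall B, is_ideal (M B)) -> is_ideal (qset M I).
Proof.
move=> hM; split.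
- by move=> B q [hq _ _ _]; rewrite (hom0 hq); apply: (id0 (hM B)).
- by move=> x y hx hy B q hq; case: (hq) => h _ _ _; rewrite (homD h); apply: (idD (hM B)); [exact: (hx B q hq)|exact: (hy B q hq)].
- by move=> a x hx B q hq; case: (hq) => h _ _ _; rewrite (homZ h); apply: (idZ (hM B)); exact: (hx B q hq).
- move=> a x hx; split => B q hq; case: (hq) => h _ _ _; rewrite (homM h).
    by apply: (idMl (hM B)); exact: (hx B q hq).
  by apply: (idMr (hM B)); exact: (hx B q hq).
Qed.

Lemma qset_sub (M : ideal_map R) (A : banach_algebra R) (I : set A) :
  (forall B, is_ideal (M B)) -> I `<=` qset M I.
Proof.
move=> hM x Ix B q [_ _ _ hk].
have : (q @^-1` [set 0]) x by rewrite hk.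
by move=> /= ->; apply: (id0 (hM B)).
Qed.

Lemma qset_fwd (M N : ideal_map R) :
  fwd M -> (forall A, is_closed_ideal (N A)) -> fwd N -> fwd (iconv M N).
Proof.
move=> fM hN fN A B f hf fc fs x hx B' q' [hq qc qs qk].
have [D [qD [hqD fact]]] := quot_exists (hN A).
have hqf : is_hom (q' \o f) by apply: hom_comp.
have ker : forall z, N A z -> (q' \o f) z = 0.
  move=> z /(fN _ _ _ hf fc fs) Nz.
  by have : (q' @^-1` [set 0]) (f z) by rewrite qk.
have [g [hg gE gs gc]] := fact _ _ hqf ker.
rewrite -[q' (f x)]/((q' \o f) x) -gE.
apply: (fM _ _ g hg).
- by apply: gc; apply: cont_comp.
- apply: gs => y; have [b <-] := qs y; have [a <-] := fs b; by exists a.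
- exact: (hx D qD hqD).
Qed.

Lemma Sigma_a_cfwd : fwd (@Sigma_a R).
Proof. by move=> A B f hf _ fs; apply: Sigma_a_fwd. Qed.

End M2.
Section Tower.
Variable R : realType.
Local Notation C := R[i].
Variable Rm : ideal_map R.
Arguments Rm : clear implicits.
Hypothesis hRm : forall B : banach_algebra R, is_ideal (Rm B).
Variable A : banach_algebra R.
Local Notation T := (@conv_tower R Rm A).
Local Notation f := (@conv_step R Rm A).

Lemma step_infl I : I `<=` f I.
Proof. by move=> x /(qset_sub hRm) h; apply: subset_closure. Qed.

Lemma tower_closed I : T I -> closed I.
Proof. by case=> *; apply: closed_closure. Qed.

Lemma tower0 I : T I -> I 0.
Proof.
elim=> [J _ IH|S _ _]; first by apply: step_infl.
by apply: subset_closure; left.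
Qed.

Lemma sup_le (S : set (set A)) c : T c -> (forall s, S s -> s `<=` c) ->
  closure ([set 0] `|` \bigcup_(I in S) I) `<=` c.
Proof.
move=> Tc h; rewrite [X in _ `<=` X](proj1 (closure_id c) (tower_closed Tc)).
apply: closureS => x [-> | [s Ss sx]]; first exact: tower0.
exact: h s Ss x sx.
Qed.

Definition extreme c := forall t, T t -> t `<=` c -> t <> c -> f t `<=` c.

Lemma L1 c : T c -> extreme c -> forall t, T t -> t `<=` c \/ f c `<=` t.
Proof.
move=> Tc ec t Tt; elim: Tt => [I TI [Ic|fcI]|S ST IH].
- have [->|neq] := pselect (I = c); first by right.
  by left; apply: ec.
- by right; exact (subset_trans fcI (@step_infl I)).
- 
  have [[s [Ss ns]]|ne] := pselect (exists s, S s /\ ~ s `<=` c).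
    have [//|fcs] := IH s Ss.
    right; apply: subset_trans fcs _ => x sx; apply: subset_closure; right; by exists s.
  left; apply: sup_le => // s Ss; apply: contrapT => ns; apply: ne; by exists s.
Qed.

Lemma L2 c : T c -> extreme c.
Proof.
elim.
- move=> c' Tc' ec' t Tt tsub tneq.
  have [tc|fct] := L1 Tc' ec' Tt.
    have [->|neq] := pselect (t = c'); first by [].
    by apply: subset_trans (ec' t Tt tc neq) (@step_infl c').
  by exfalso; apply: tneq; apply/seteqP; split.
- move=> S ST IH t Tt tsub tneq.
  have [[s [Ss ns]]|ne] := pselect (exists s, S s /\ ~ s `<=` t); last first.
    exfalso; apply: tneq; apply/seteqP; split => //.
    apply: sup_le => // s Ss; apply: contrapT => ns; apply: ne; by exists s.
  have [ts|fst] := L1 (ST s Ss) (IH s Ss) Tt; last first.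
    by exfalso; apply: ns; apply: subset_trans (@step_infl s) fst.
  have [ets|neq] := pselect (t = s); first by exfalso; apply: ns; rewrite -ets.
  apply: subset_trans (IH s Ss t Tt ts neq) _ => x sx.
  by apply: subset_closure; right; exists s.
Qed.

Lemma chain s t : T s -> T t -> s `<=` t \/ t `<=` s.
Proof.
move=> Ts Tt; have [ts|fst] := L1 Ts (L2 Ts) Tt; first by right.
by left; apply: subset_trans (@step_infl s) fst.
Qed.

Lemma tower_ideal I : T I -> is_ideal I.
Proof.
elim.
- by move=> J _ _; apply: closure_ideal; apply: qset_ideal.
- move=> S ST IH; apply: closure_ideal.
  have mem : forall s x, S s -> s x -> ([set 0] `|` \bigcup_(I in S) I) x.
    by move=> s x Ss sx; right; exists s.
  split.
  + by left.
  + move=> x y [-> | [s Ss sx]] [-> | [t St ty]].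
    * by left; rewrite addr0.
    * by rewrite add0r; apply: (mem t).
    * by rewrite addr0; apply: (mem s).
    * have [st|ts] := chain (ST s Ss) (ST t St).
        by apply: (mem t) => //; apply: (idD (IH t St)) => //; apply: st.
      by apply: (mem s) => //; apply: (idD (IH s Ss)) => //; apply: ts.
  + move=> a x [-> | [s Ss sx]]; first by left; rewrite scaler0.
    by apply: (mem s) => //; apply: (idZ (IH s Ss)).
  + move=> a x [-> | [s Ss sx]]; first by split; left; rewrite ?bmul0l ?bmul0r.
    by split; apply: (mem s) => //; [apply: (idMl (IH s Ss))|apply: (idMr (IH s Ss))].
Qed.

Lemma star_tower : T (@conv_star R Rm A).
Proof. by apply: conv_tower_lim. Qed.

Lemma mem_star I : T I -> I `<=` @conv_star R Rm A.
Proof. by move=> TI x Ix; apply: subset_closure; right; exists I. Qed.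

Lemma star_step : f (@conv_star R Rm A) `<=` @conv_star R Rm A.
Proof. by apply: mem_star; apply: conv_tower_step; apply: star_tower. Qed.

Lemma tower_cideal I : T I -> is_closed_ideal I.
Proof. by move=> TI; split; [apply: tower_ideal|apply: tower_closed]. Qed.

End Tower.

Section Star.
Variable R : realType.

Lemma quot_ker (A B : banach_algebra R) (I : set A) (q : A -> B) :
  is_quotient_map I q -> forall z, I z <-> q z = 0.
Proof. by case=> _ _ _ hk z; rewrite -hk. Qed.

Lemma star_mono (R1 R2 : ideal_map R) :
  (forall B : banach_algebra R, is_ideal (R1 B)) -> (forall B : banach_algebra R, is_ideal (R2 B)) -> fwd R1 ->
  le_imap R1 R2 -> le_imap (conv_star R1) (conv_star R2).
Proof.
move=> h1 h2 f1 le12 A.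
set T2 := @conv_star R R2 A.
have T2c : closed T2 := tower_closed (star_tower R2 A).
suff: forall I, conv_tower R1 I -> I `<=` T2 by apply; apply: star_tower.
move=> I0 TI0; elim: TI0 => [I TI IH|S ST IH].
- rewrite [X in _ `<=` X](proj1 (closure_id T2) T2c).
  apply: closureS => x hx; apply: star_step; apply: subset_closure.
  move=> B' q' hq'.
  have [D [qD [hqD fact]]] := quot_exists (tower_cideal h1 TI).
  case: (hq') => hh qc qs _.
  have ker : forall z, I z -> q' z = 0 by move=> z /IH /(quot_ker hq').
  have [g [hg gE gs gc]] := fact _ _ hh ker.
  rewrite -gE; apply: le12; apply: (f1 _ _ g hg (gc qc) (gs qs)).
  exact: (hx D qD hqD).
- rewrite [X in _ `<=` X](proj1 (closure_id T2) T2c).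
  apply: closureS => x [-> | [s Ss sx]]; first exact: (tower0 h2 (star_tower R2 A)).
  exact: IH s Ss x sx.
Qed.

Lemma star_K (R1 R2 : ideal_map R) :
  (forall B : banach_algebra R, is_ideal (R1 B)) -> (forall B : banach_algebra R, is_ideal (R2 B)) -> fwd R1 -> fwd R2 ->
  (forall E : banach_algebra R, R1 E `<=` [set 0] -> R2 E `<=` [set 0]) ->
  le_imap (conv_star R2) (conv_star R1).
Proof.
move=> h1 h2 f1 f2 K A.
set T1 := @conv_star R R1 A.
have T1c : closed T1 := tower_closed (star_tower R1 A).
have [D1 [q1 [hq1 fact1]]] := quot_exists (tower_cideal h1 (star_tower R1 A)).
have Z : R1 D1 `<=` [set 0].
  move=> y hy; case: (hq1) => hh qc qs _.
  have [x hxy] := qs y; rewrite -hxy; apply/(quot_ker hq1).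
  apply: star_step; apply: subset_closure => B'' q'' hq''.
  case: (hq'') => hh' qc' qs' _.
  have ker : forall z, T1 z -> q'' z = 0 by move=> z /(quot_ker hq'').
  have [g [hg gE gs gc]] := fact1 _ _ hh' ker.
  rewrite -gE hxy; exact: (f1 _ _ g hg (gc qc') (gs qs') _ hy).
have Z2 := K D1 Z.
suff: forall I, conv_tower R2 I -> I `<=` T1 by apply; apply: star_tower.
move=> I0 TI0; elim: TI0 => [I TI IH|S ST IH].
- rewrite [X in _ `<=` X](proj1 (closure_id T1) T1c).
  apply: closureS => x hx.
  have [D [qD [hqD fact]]] := quot_exists (tower_cideal h2 TI).
  case: (hq1) => hh qc qs _.
  have ker : forall z, I z -> q1 z = 0 by move=> z /IH /(quot_ker hq1).
  have [g [hg gE gs gc]] := fact _ _ hh ker.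
  apply/(quot_ker hq1); apply: Z2; rewrite -gE.
  exact: (f2 _ _ g hg (gc qc) (gs qs) _ (hx D qD hqD)).
- rewrite [X in _ `<=` X](proj1 (closure_id T1) T1c).
  apply: closureS => x [-> | [s Ss sx]]; first exact: (tower0 h1 (star_tower R1 A)).
  exact: IH s Ss x sx.
Qed.

End Star.
Section M4.
Variable R : realType.

Lemma rad_ci (Q : ideal_map R) : is_topological_radical Q -> forall A, is_closed_ideal (Q A).
Proof. by case. Qed.

Lemma rad_fwd (Q : ideal_map R) : is_topological_radical Q -> fwd Q.
Proof.
case=> _ h2 _ _ _ A B f hf fc fs x hx.
by apply: (h2 A B f hf fc fs); exists x.
Qed.

Lemma closure0_eq (A : banach_algebra R) (w : A) : closure [set 0] w -> w = 0.
Proof.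
move/closureA => h; apply: nr_eq0.
have [//|nw] := eqVneq (nr w) 0.
have nw0 : 0 < nr w by rewrite lt0r nw nr_ge0.
have [y [-> hy]] := h _ nw0; by rewrite subr0 ltxx in hy.
Qed.

Lemma hom_sum_zero (A B : banach_algebra R) (g : A -> B) (s : seq A) :
  is_hom g -> (forall y, y \in s -> g y = 0) -> g (\sum_(y <- s) y) = 0.
Proof.
move=> hg; elim: s => [|a s IH] h; first by rewrite big_nil (hom0 hg).
rewrite big_cons (homD hg) h ?mem_head // IH ?addr0 // => y ys.
by apply: h; rewrite in_cons ys orbT.
Qed.

Section Fam.
Variable F' : ideal_map R -> Prop.
Hypothesis hF' : forall Q, F' Q -> is_topological_radical Q.

Lemma H_ci A : is_closed_ideal (@H_fam R F' A).
Proof.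
split; last exact: closed_closure.
apply: closure_ideal; apply: sum_family_ideal => I [Q FQ ->].
exact: (proj1 (rad_ci (hF' FQ) A)).
Qed.

Lemma H_fwd : fwd (H_fam F').
Proof.
move=> A B f hf fc fs x hx; apply: (cont_closure fc _ hx).
move=> y [s [hs ->]]; exists (map f s); split; last exact: hom_sum.
move=> _ /mapP [z zs ->]; have [I [Q FQ ->] Qz] := hs z zs.
exists (Q B); first by exists Q.
exact: (rad_fwd (hF' FQ) hf fc fs).
Qed.

Lemma H_sub Q : F' Q -> forall A, Q A `<=` @H_fam R F' A.
Proof.
move=> FQ A x Qx; apply: subset_closure; exists [:: x]; split; last by rewrite big_seq1.
by move=> y; rewrite mem_seq1 => /eqP ->; exists (Q A) => //; exists Q.
Qed.

End Fam.

Lemma H_mono (F1 F2 : ideal_map R -> Prop) : (forall Q, F1 Q -> F2 Q) ->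
  forall A, @H_fam R F1 A `<=` @H_fam R F2 A.
Proof.
move=> h A; apply: closureS => x [s [hs ->]]; exists s; split => // y ys.
by have [I [Q FQ ->] Qy] := hs y ys; exists (Q A) => //; exists Q => //; apply: h.
Qed.

Lemma id_quot (E : banach_algebra R) (I : set E) : I = [set 0] -> is_quotient_map I (@id E).
Proof.
move=> hI; split.
- exact: id_hom.
- by apply: contP => x e e0; exists e.
- by move=> y; exists y.
- by rewrite hI; apply/seteqP; split.
Qed.

End M4.

Theorem proposition4p9 (R : realType) (F : ideal_map R -> Prop) (P : ideal_map R) :
  (forall Q, F Q -> is_topological_radical Q) ->
  F P ->
  le_imap (@Sigma_beta R) P ->
  let G := fun Q => F Q /\ Q <> P in
  le_imap (a_map (H_fam F)) (iconv (a_map P) (H_fam G)) /\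
  conv_star (a_map (H_fam F)) = conv_star (iconv (a_map P) (H_fam G)).
Proof.
move=> hF FP _ G.
have hG : forall Q, G Q -> is_topological_radical Q by move=> Q [FQ _]; apply: hF.
have hP := hF P FP.
set R1 := a_map (H_fam F).
set R2 := iconv (a_map P) (H_fam G).
have hSa : forall B : banach_algebra R, is_ideal (@Sigma_a R B) by move=> B; apply: Sigma_a_ideal.
have haP : forall B : banach_algebra R, is_ideal (@a_map R P B) by move=> B; apply: qset_ideal.
have h1 : forall B : banach_algebra R, is_ideal (R1 B) by move=> B; apply: qset_ideal.
have h2 : forall B : banach_algebra R, is_ideal (R2 B) by move=> B; apply: qset_ideal.
have fa : fwd (a_map P) := qset_fwd (@Sigma_a_cfwd R) (rad_ci hP) (rad_fwd hP).
have f1 : fwd R1 := qset_fwd (@Sigma_a_cfwd R) (H_ci hF) (H_fwd hF).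
have f2 : fwd R2 := qset_fwd fa (H_ci hG) (H_fwd hG).
have c1 : le_imap R1 R2.
  move=> A x hx B q hq C r hr.
  have [D [qD [hqD fact]]] := quot_exists (H_ci hF A).
  case: (hq) => hqh qc qs _; case: (hr) => hrh rc rs _.
  have hrq := hom_comp hqh hrh.
  have ker : forall z, H_fam F z -> (r \o q) z = 0.
    move=> z hz; apply: closure0_eq.
    apply: (cont_closure (cont_comp qc rc) _ hz) => y [s [hs ->]].
    apply: (hom_sum_zero hrq) => u us.
    have [I [Q FQ ->] Qu] := hs u us.
    have [QP|QnP] := pselect (Q = P).
      rewrite QP in Qu; have := rad_fwd hP hqh qc qs Qu.
      by move/(quot_ker hr).
    have : H_fam G u by exact (@H_sub R G Q (conj FQ QnP) A u Qu).
    by move/(quot_ker hq) => /= ->; apply: (hom0 hrh).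
  have [g [hg gE gs gc]] := fact _ _ hrq ker.
  rewrite -[r (q x)]/((r \o q) x) -gE.
  apply: (Sigma_a_fwd hg); last exact: (hx D qD hqD).
  apply: gs => y; have [b <-] := rs y; have [a <-] := qs b; by exists a.
split; first exact: c1.
apply: functional_extensionality_dep => A; apply/seteqP; split.
  exact: (star_mono h1 h2 f1 c1).
apply: (star_K h1 h2 f1 f2) => E hE y hy.
have HF0 : forall z : E, H_fam F z -> z = 0.
  move=> z hz; apply: (hE z); rewrite /R1 => B q hq.
  by rewrite (proj1 (quot_ker hq z) hz); apply: (id0 (hSa B)).
have Sa0 : forall z, @Sigma_a R E z -> z = 0.
  move=> z hz; apply: (hE z); rewrite /R1 => B q [hh qc qs _].
  exact: (Sigma_a_fwd hh qs hz).
have HGeq : @H_fam R G E = [set 0].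
  apply/seteqP; split => [z hz|z ->]; last exact: (id0 (proj1 (H_ci hG E))).
  by apply: HF0; apply: (H_mono (fun Q h => proj1 h) hz).
have PEeq : P E = [set 0].
  apply/seteqP; split => [z hz|z ->]; last exact: (id0 (proj1 (rad_ci hP E))).
  by apply: HF0; exact (@H_sub R F P FP E z hz).
have := hy E id (id_quot HGeq) E id (id_quot PEeq).
exact: Sa0.
Qed.
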